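(* Let $F,\theta \geq 1$ be integers and let $\eta_0(x)$, $x \in \mathbb{Z}$, be i.i.d. uniform on $\{0,1\}^F$. For each edge $e = (x,x+1)$ let $\zeta_0(e) = H(\eta_0(x),\eta_0(x+1))$, let $(X_e)_e$ be random variables which, conditionally on $\eta_0$, are independent with $X_e$ Bernoulli with success probability $1 - \zeta_0(e)/F$, and set $\phi(e) = -\zeta_0(e)$ if $\zeta_0(e) \leq \theta$ and $\phi(e) = \zeta_0(e) + 2(X_e - \theta)$ if $\zeta_0(e) > \theta$. Then there exist $C_1 < \infty$ and $c_1 > 0$ such that for all $\epsilon > 0$ and all $N \geq 1$, $$P\Big(\sum_{e \in (-N,0)} \phi(e) \leq N(E\phi(e) - \epsilon)\Big) \leq C_1 \exp(-c_1 N \epsilon^2).$$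
   Context: $H(u,v) = \#\{i : u_i \neq v_i\}$ is the Hamming distance on $\{0,1\}^F$. Edges $(x,x+1)$ of $\mathbb{Z}$ are identified with their midpoints $x+1/2$, so $e \in (-N,0)$ ranges over the $N$ edges $(x,x+1)$ with $x = -N,\ldots,-1$. $E\phi(e)$ does not depend on $e$. *)

(* Defs.v *)
From HB Require Import structures.
From mathcomp Require Import all_boot all_order all_algebra.
From mathcomp Require Import reals.
From mathcomp Require Import sequences.
Unset Printing Implicit Defensive.
Import Order.TTheory GRing.Theory Num.Theory.
Local Open Scope ring_scope.

Definition word (F : nat) := {ffun 'I_F -> bool}.

Definition hamming {F : nat} (u v : word F) : nat := #|[set i | u i != v i]|.

(* Configuration eta_0 restricted to the sites x = -N, ..., 0:
   site index i : 'I_N.+1 stands for x = i - N. *)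
Definition config (F N : nat) := {ffun 'I_N.+1 -> word F}.

(* zeta_0 of the edge e_j = (x, x+1) with x = j - N, j : 'I_N,
   i.e. edge between site indices j and j+1. *)
Definition zeta {F N : nat} (eta : config F N) (j : 'I_N) : nat :=
  hamming (eta (inord j)) (eta (inord j.+1)).

Definition phi_val (R : realType) (theta z : nat) (x : bool) : R :=
  if (z <= theta)%N then - (z%:R) else z%:R + 2 * ((x : nat)%:R - theta%:R).

Definition bern_w (R : realType) (F z : nat) (x : bool) : R :=
  if x then 1 - z%:R / F%:R else z%:R / F%:R.

Definition unif_w (R : realType) (F : nat) : R := (2 ^+ F)^-1.

Definition Ephi (R : realType) (F theta : nat) : R :=
  \sum_(u : word F) \sum_(v : word F) \sum_(x : bool)
     unif_w R F * unif_w R F * bern_w R F (hamming u v) x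
       * phi_val R theta (hamming u v) x.

Definition phi_sum (R : realType) (F theta N : nat)
    (eta : config F N) (X : {ffun 'I_N -> bool}) : R :=
  \sum_(j < N) phi_val R theta (zeta eta j) (X j).

(* P( sum_{e in (-N,0)} phi(e) <= N (E phi - eps) ), computed exactly as the
   sum over the (finitely many) relevant variables eta_0(-N..0), (X_e)_{e in (-N,0)}
   of their joint probability weights. *)
Definition prob_lower_dev (R : realType) (F theta N : nat) (eps : R) : R :=
  \sum_(eta : config F N) \sum_(X : {ffun 'I_N -> bool})
     (\prod_(i < N.+1) unif_w R F) * (\prod_(j < N) bern_w R F (zeta eta j) (X j))
     * (if phi_sum R F theta N eta X <= N%:R * (Ephi R F theta - eps) then 1 else 0).

(* Main.v *)
Require Import Defs.
From HB Require Import structures.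
From mathcomp Require Import all_boot all_order all_algebra.
From mathcomp Require Import reals.
From mathcomp Require Import sequences exp.
From mathcomp Require Import ring lra zify.
Import Order.TTheory GRing.Theory Num.Theory.
Local Open Scope ring_scope.

Definition pop {F : nat} (v : word F) : nat := #|[set i | v i]|.
Definition xorw {F : nat} (u v : word F) : word F := [ffun i => u i (+) v i].

Lemma xorwK F (u v : word F) : xorw u (xorw u v) = v.
Proof. by apply/ffunP => i; rewrite !ffunE; case: (u i); case: (v i). Qed.

Lemma hamming_xorw F (u v : word F) : hamming u v = pop (xorw u v).
Proof.
rewrite /hamming /pop; apply: eq_card => i; rewrite !inE ffunE.
by case: (u i); case: (v i).
Qed.

Lemma pop_le F (v : word F) : (pop v <= F)%N.
Proof. by apply: leq_trans (max_card _) _; rewrite card_ord. Qed.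

Lemma card_word F : #|{: word F}| = (2 ^ F)%N.
Proof. by rewrite card_ffun card_bool card_ord. Qed.

Lemma unif_pos (R : realType) F : 0 < unif_w R F.
Proof. by rewrite /unif_w invr_gt0 exprn_gt0. Qed.

Lemma sum_unif (R : realType) F (c : R) : \sum_(u : word F) unif_w R F * c = c.
Proof.
rewrite sumr_const card_word -mulr_natr natrX /unif_w mulrAC mulVf ?mul1r //.
by rewrite expf_neq0 // pnatr_eq0.
Qed.

Lemma bern_ge0 (R : realType) F z x : (1 <= F)%N -> (z <= F)%N -> 0 <= bern_w R F z x.
Proof.
move=> hF hz; have hF' : 0 < (F%:R : R) by rewrite ltr0n.
have : (z%:R : R) / F%:R <= 1 by rewrite ler_pdivrMr // mul1r ler_nat.
have : 0 <= (z%:R : R) / F%:R by rewrite divr_ge0.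
rewrite /bern_w; case: x; lra.
Qed.

Lemma bern_sum (R : realType) F z : \sum_(x : bool) bern_w R F z x = 1.
Proof. by rewrite big_bool /= /bern_w subrK. Qed.

Lemma phi_lb (R : realType) theta z x : - (theta%:R : R) <= phi_val R theta z x.
Proof.
rewrite /phi_val; case: leqP => h.
  by rewrite lerN2 ler_nat.
have : (theta%:R + 1 : R) <= z%:R by rewrite natr1 ler_nat.
have : (0 : R) <= (x : nat)%:R by [].
lra.
Qed.

Lemma phi_ub (R : realType) F theta z x : (z <= F)%N -> phi_val R theta z x <= (F + 2)%:R.
Proof.
move=> hz; have : (z%:R : R) <= F%:R by rewrite ler_nat.
have : (0 : R) <= theta%:R by [].
have : (0 : R) <= z%:R by [].
have : ((x : nat)%:R : R) <= 1 by case: x.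
rewrite natrD /phi_val; case: leqP => _; lra.
Qed.

Lemma exp_quad (R : realType) (t : R) : `|t| <= 1/2 -> expR t <= 1 + t + 2 * t ^+ 2.
Proof.
move=> ht; have [h1 h2] : -(1/2) <= t /\ t <= 1/2 by move: ht; rewrite ler_norml => /andP.
have e1 := expR_ge1Dx (- t).
have ep := expR_gt0 t.
have : expR t * expR (- t) = 1 by rewrite expRxMexpNx_1.
have : 0 <= t ^+ 2 * (1 - 2 * t) by rewrite mulr_ge0 ?sqr_ge0 //; lra.
move=> hq hm.
have hle : expR t * (1 - t) <= 1.
  rewrite -hm ler_wpM2l //; [exact: ltW | lra].
nra.
Qed.

Definition psi {F N : nat} (eta : config F N) : word F * {ffun 'I_N -> word F} :=
  (eta ord0, [ffun j : 'I_N => xorw (eta (inord j)) (eta (inord j.+1))]).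

Lemma psi_inj F N : injective (@psi F N).
Proof.
move=> e1 e2 [h0 hd].
have key : forall i, (i <= N)%N -> e1 (inord i) = e2 (inord i).
  elim=> [|i IH] hi.
    have -> : (inord 0 : 'I_N.+1) = ord0 by apply/val_inj; rewrite /= inordK.
    exact: h0.
  have hiN : (i < N)%N by [].
  have := congr1 (fun f : {ffun 'I_N -> word F} => f (Ordinal hiN)) hd.
  rewrite !ffunE /= => hx.
  by rewrite -(xorwK _ (e1 (inord i)) (e1 (inord i.+1))) hx IH ?xorwK // ltnW.
apply/ffunP => k; rewrite -(inord_val k); apply: key.
by rewrite -ltnS ltn_ord.
Qed.

Lemma psi_bij F N : bijective (@psi F N).
Proof.
apply: inj_card_bij; first exact: psi_inj.
by rewrite card_prod !card_ffun card_bool !card_ord expnS.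
Qed.

Lemma zeta_psi F N (eta : config F N) j : zeta eta j = pop ((psi eta).2 j).
Proof. by rewrite /zeta hamming_xorw /psi /= ffunE. Qed.

Lemma sum_eta (R : realType) F N (g : nat -> R) :
  \sum_(eta : config F N) (\prod_(i < N.+1) unif_w R F) * \prod_(j < N) g (zeta eta j)
  = (\sum_(v : word F) unif_w R F * g (pop v)) ^+ N.
Proof.
pose G (p : word F * {ffun 'I_N -> word F}) :=
  (\prod_(i < N.+1) unif_w R F) * \prod_(j < N) g (pop (p.2 j)).
transitivity (\sum_(eta : config F N) G (psi eta)).
  apply: eq_bigr => eta _; rewrite /G; congr (_ * _).
  by apply: eq_bigr => j _; rewrite zeta_psi.
rewrite -(reindex (@psi F N) (P:=xpredT) (F:=G) (onW_bij _ (psi_bij F N))) /=.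
rewrite -(pair_bigA _ (fun w d => G (w, d))) /G /=.
under eq_bigr => w _ do rewrite -mulr_sumr -(bigA_distr_bigA (fun j v => g (pop v))) /=.
rewrite prodr_const card_ord prodr_const card_ord exprS -mulrA sum_unif.
by rewrite -exprMn mulr_sumr.
Qed.

Lemma ind_le (R : realType) F theta N (eta : config F N) (X : {ffun 'I_N -> bool})
  (lam eps : R) : 0 <= lam ->
  (if phi_sum R F theta N eta X <= N%:R * (Ephi R F theta - eps) then 1 else 0)
  <= expR (- (lam * N%:R * eps)) *
     \prod_(j < N) expR (lam * (Ephi R F theta - phi_val R theta (zeta eta j) (X j))).
Proof.
move=> hl; rewrite -expR_sum -expRD.
set S := phi_sum R F theta N eta X; set E := Ephi R F theta.
have -> : \sum_(j < N) lam * (E - phi_val R theta (zeta eta j) (X j)) = lam * (N%:R * E - S).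
  by rewrite -mulr_sumr sumrB sumr_const card_ord mulr_natl.
case: ifP => h; last exact: expR_ge0.
apply: le_trans (expR_ge1Dx _); rewrite lerDl.
have : 0 <= lam * (N%:R * (E - eps) - S) by rewrite mulr_ge0 // subr_ge0.
lra.
Qed.

Definition gfun (R : realType) F theta (lam : R) (z : nat) : R :=
  \sum_(x : bool) bern_w R F z x * expR (lam * (Ephi R F theta - phi_val R theta z x)).

Lemma main_bound (R : realType) F theta N (lam eps : R) : (1 <= F)%N -> 0 <= lam ->
  prob_lower_dev R F theta N eps <=
  expR (- (lam * N%:R * eps)) * (\sum_(v : word F) unif_w R F * gfun R F theta lam (pop v)) ^+ N.
Proof.
move=> hF hl; rewrite /prob_lower_dev.
set c := expR (- (lam * N%:R * eps)).
set E := Ephi R F theta.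
have Pge0 : 0 <= \prod_(i < N.+1) unif_w R F.
  by apply: prodr_ge0 => i _; exact: ltW (unif_pos R F).
have Bge0 : forall (eta : config F N) (X : {ffun 'I_N -> bool}),
    0 <= \prod_(j < N) bern_w R F (zeta eta j) (X j).
  move=> eta X; apply: prodr_ge0 => j _; apply: bern_ge0 => //.
  by rewrite zeta_psi pop_le.
apply: le_trans (_ : \sum_(eta : config F N) \sum_(X : {ffun 'I_N -> bool})
   c * ((\prod_(i < N.+1) unif_w R F) *
     \prod_(j < N) (bern_w R F (zeta eta j) (X j) *
        expR (lam * (E - phi_val R theta (zeta eta j) (X j))))) <= _).
  apply: ler_sum => eta _; apply: ler_sum => X _.
  rewrite big_split /= mulrA [c * _]mulrC -!mulrA.
  apply: (ler_wpM2l Pge0).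
  rewrite mulrCA; apply: (ler_wpM2l (Bge0 eta X)).
  exact: ind_le.
rewrite -sum_eta mulr_sumr; apply: ler_sum => eta _.
rewrite -mulr_sumr; apply: (ler_wpM2l (expR_ge0 _)).
rewrite -mulr_sumr; apply: (ler_wpM2l Pge0).
by rewrite /gfun bigA_distr_bigA.
Qed.

Lemma Ephi_eq (R : realType) F theta : Ephi R F theta =
  \sum_(v : word F) (unif_w R F * bern_w R F (pop v) true * phi_val R theta (pop v) true
                   + unif_w R F * bern_w R F (pop v) false * phi_val R theta (pop v) false).
Proof.
rewrite /Ephi.
transitivity (\sum_(u : word F) unif_w R F *
  \sum_(v : word F) (unif_w R F * bern_w R F (pop v) true * phi_val R theta (pop v) true
                   + unif_w R F * bern_w R F (pop v) false * phi_val R theta (pop v) false)).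
  apply: eq_bigr => u _.
  rewrite (reindex_inj (can_inj (xorwK _ u))) /= mulr_sumr.
  apply: eq_bigr => v _; rewrite big_bool hamming_xorw xorwK /=; ring.
exact: sum_unif.
Qed.

Lemma bern_tf (R : realType) F z : bern_w R F z true + bern_w R F z false = 1.
Proof. by rewrite /bern_w subrK. Qed.

Lemma avg2 (R : realType) (u bt bf yt yf lo hi : R) :
  0 <= u -> 0 <= bt -> 0 <= bf -> bt + bf = 1 -> lo <= yt <= hi -> lo <= yf <= hi ->
  u * lo <= u * bt * yt + u * bf * yf <= u * hi.
Proof.
move=> hu hbt hbf hb /andP[h1 h2] /andP[h3 h4].
rewrite -!mulrA -mulrDr; apply/andP; split; apply: ler_wpM2l => //.
  rewrite -{1}(mul1r lo) -hb mulrDl.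
  by apply: lerD; apply: ler_wpM2l.
rewrite -[X in _ <= X](mul1r hi) -hb mulrDl.
by apply: lerD; apply: ler_wpM2l.
Qed.

Lemma Ephi_bounds (R : realType) F theta : (1 <= F)%N ->
  - (theta%:R : R) <= Ephi R F theta /\ Ephi R F theta <= (F + 2)%:R.
Proof.
move=> hF.
have key : forall v : word F,
  unif_w R F * (- (theta%:R : R)) <=
  unif_w R F * bern_w R F (pop v) true * phi_val R theta (pop v) true
  + unif_w R F * bern_w R F (pop v) false * phi_val R theta (pop v) false
  <= unif_w R F * (F + 2)%:R.
  move=> v; apply: avg2.
  - exact: ltW (unif_pos R F).
  - exact: (bern_ge0 _ _ _ _ hF (pop_le _ v)).
  - exact: (bern_ge0 _ _ _ _ hF (pop_le _ v)).
  - exact: bern_tf.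
  - by apply/andP; split; [exact: phi_lb | exact: (phi_ub _ _ _ _ _ (pop_le _ v))].
  - by apply/andP; split; [exact: phi_lb | exact: (phi_ub _ _ _ _ _ (pop_le _ v))].
rewrite Ephi_eq; split.
  rewrite -[X in X <= _](sum_unif R F).
  by apply: ler_sum => v _; case/andP: (key v).
rewrite -[X in _ <= X](sum_unif R F).
by apply: ler_sum => v _; case/andP: (key v).
Qed.

Lemma exp_step (R : realType) (lam E Y M : R) : 0 <= lam -> lam * M <= 1/2 ->
  `|E - Y| <= M -> expR (lam * (E - Y)) <= 1 + lam * (E - Y) + 2 * (lam * M) ^+ 2.
Proof.
move=> hl hM hEY.
have ht : `|lam * (E - Y)| <= lam * M.
  by rewrite normrM ger0_norm // ler_wpM2l.
apply: le_trans (exp_quad _ _ (le_trans ht hM)) _.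
rewrite lerD2l ler_pM2l ?ltr0n //.
move: ht; rewrite ler_norml => /andP[h1 h2]; nra.
Qed.

Lemma rho_bound (R : realType) F theta (lam : R) : (1 <= F)%N -> 0 <= lam ->
  lam * (F + 2 + theta)%:R <= 1/2 ->
  \sum_(v : word F) unif_w R F * gfun R F theta lam (pop v)
    <= 1 + 2 * (lam * (F + 2 + theta)%:R) ^+ 2.
Proof.
move=> hF hl hM.
set M : R := (F + 2 + theta)%:R.
set K := 2 * (lam * M) ^+ 2.
set E := Ephi R F theta.
have [hE1 hE2] := Ephi_bounds R F theta hF.
have hs : \sum_(v : word F) unif_w R F = 1.
  by rewrite -(sum_unif R F 1); apply: eq_bigr => v _; rewrite mulr1.
have hY : forall (v : word F) x, `|E - phi_val R theta (pop v) x| <= M.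
  move=> v x; have := phi_lb R theta (pop v) x.
  have := phi_ub R F theta (pop v) x (pop_le _ v).
  rewrite /M !natrD in hE2 * => h1 h2.
  rewrite ler_norml; apply/andP; split; rewrite /E; lra.
apply: le_trans (_ : \sum_(v : word F) ((1 + K + lam * E) * unif_w R F
   - lam * (unif_w R F * bern_w R F (pop v) true * phi_val R theta (pop v) true
   + unif_w R F * bern_w R F (pop v) false * phi_val R theta (pop v) false)) <= _).
  apply: ler_sum => v _; rewrite /gfun big_bool.
  set bt := bern_w R F (pop v) true; set bf := bern_w R F (pop v) false.
  set Yt := phi_val R theta (pop v) true; set Yf := phi_val R theta (pop v) false.
  have hb : bt + bf = 1 by exact: bern_tf.
  apply: le_trans (_ : unif_w R F * (bt * (1 + lam * (E - Yt) + K)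
                                + bf * (1 + lam * (E - Yf) + K)) <= _).
    apply: ler_wpM2l; first exact: ltW (unif_pos R F).
    apply: lerD; apply: ler_wpM2l; try exact: (bern_ge0 _ _ _ _ hF (pop_le _ v));
      exact: (exp_step _ _ _ _ _ hl hM (hY v _)).
  rewrite le_eqVlt; apply/orP; left; apply/eqP.
  have -> : bf = 1 - bt by rewrite -hb addrAC subrr add0r.
  ring.
rewrite sumrB -!mulr_sumr hs -Ephi_eq /E.
lra.
Qed.

Theorem lemma3 (R : realType) (F theta : nat) (hF : (1 <= F)%N) (htheta : (1 <= theta)%N) :
  exists C1 : R, exists2 c1 : R, 0 < c1 &
    forall (eps : R) (N : nat), 0 < eps -> (1 <= N)%N ->
      prob_lower_dev R F theta N eps <= C1 * expR (- (c1 * N%:R * eps ^+ 2)).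
Proof.
set M : R := (F + 2 + theta)%:R.
have hM0 : 0 < M by rewrite /M ltr0n; lia.
have hM0' : M != 0 by rewrite gt_eqF.
exists 1; exists (1 / (8 * M ^+ 2)).
  by rewrite divr_gt0 // mulr_gt0 // exprn_gt0.
move=> eps N he hN.
have hN0 : 0 < (N%:R : R) by rewrite ltr0n.
case: (leP eps (2 * M)) => heps.
  set lam := eps / (4 * M ^+ 2).
  have h4 : 0 < 4 * M ^+ 2 by rewrite mulr_gt0 // exprn_gt0.
  have hl : 0 <= lam by rewrite /lam divr_ge0 // ltW.
  have hlM : lam * (F + 2 + theta)%:R <= 1 / 2.
    rewrite -/M (_ : lam * M = eps / (4 * M)); last first.
    by rewrite /lam; field; move: hM0'; rewrite /M !natrD.
    rewrite ler_pdivrMr ?mulr_gt0 //; lra.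
  apply: le_trans (main_bound R F theta N lam eps hF hl) _.
  have hr := rho_bound R F theta lam hF hl hlM.
  set rho := \sum_(v : word F) unif_w R F * gfun R F theta lam (pop v) in hr *.
  have hr0 : 0 <= rho.
    apply: sumr_ge0 => v _; apply: mulr_ge0; first exact: ltW (unif_pos R F).
    apply: sumr_ge0 => x _; apply: mulr_ge0; last exact: expR_ge0.
    exact: (bern_ge0 _ _ _ _ hF (pop_le _ v)).
  set K := 2 * (lam * (F + 2 + theta)%:R) ^+ 2 in hr.
  have hrK : rho <= expR K by apply: le_trans hr (expR_ge1Dx K).
  apply: le_trans (_ : expR (- (lam * N%:R * eps)) * expR K ^+ N <= _).
    apply: ler_wpM2l; first exact: expR_ge0.
    by apply: lerXn2r => //; rewrite nnegrE ?expR_ge0.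
  rewrite -expRM_natl -expRD mul1r le_eqVlt; apply/orP; left; apply/eqP.
  by congr expR; rewrite /K /lam -/M; field; move: hM0'; rewrite /M !natrD.
have [hE1 hE2] := Ephi_bounds R F theta hF.
rewrite /prob_lower_dev big1 ?mul1r ?expR_ge0 // => eta _.
rewrite big1 // => X _; rewrite ifF ?mulr0 //; apply/negbTE; rewrite -ltNge.
set S := phi_sum R F theta N eta X.
have hS : N%:R * (- (theta%:R : R)) <= S.
  apply: le_trans (_ : \sum_(j < N) (- (theta%:R : R)) <= _).
    by rewrite sumr_const card_ord mulr_natl.
  by apply: ler_sum => j _; apply: phi_lb.
apply: lt_le_trans hS; rewrite ltr_pM2l //.
move: hE2 heps; rewrite /M !natrD; lra.
Qed.
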